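(* Let $\{M_i\mid i\in I\}$ be a collection of monoids. Then the monoid free product $F=\prod_1^{*}\{M_i\mid i\in I\}$ is finitely right equated if and only if each $M_i$ ($i\in I$) is finitely right equated.
   Context: For a semigroup $S$ and $a\in S$, $\mathbf{r}_S(a)=\{(s,t)\in S\times S\mid as=at\}$ is the right annihilator congruence of $a$. $S$ is finitely right equated (FRE) if each $\mathbf{r}_S(a)$ is finitely generated as a right congruence, i.e. equals the smallest right congruence containing some finite subset. For pairwise disjoint monoids $M_i$ with identities $1_i$, the monoid free product is the quotient of the semigroup free product $\prod^{*}\{M_i\}$ (sequences $s_1*\dots*s_n$ with $s_j\in\bigsqcup M_i$, consecutive entries from different factors, multiplied by concatenation and multiplying adjacent entries from the same factor) by the congruence generated by $\{(1_i,1_j)\mid i,j\in I\}$. *)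

(* Defs.v *)
From Stdlib Require Import List Classical ClassicalEpsilon.
Import ListNotations.
Set Implicit Arguments.

Definition right_congruence (T : Type) (op : T -> T -> T) (R : T -> T -> Prop) : Prop :=
  (forall s, R s s) /\ (forall s t, R s t -> R t s) /\
  (forall s t u, R s t -> R t u -> R s u) /\
  (forall s t u, R s t -> R (op s u) (op t u)).

Definition right_cong_gen (T : Type) (op : T -> T -> T) (X : list (T * T)) (s t : T) : Prop :=
  forall R, right_congruence op R -> (forall p, In p X -> R (fst p) (snd p)) -> R s t.

Definition r_ann (T : Type) (op : T -> T -> T) (a s t : T) : Prop := op a s = op a t.

Definition FRE (T : Type) (op : T -> T -> T) : Prop :=
  forall a : T, exists X : list (T * T),
    forall s t, r_ann op a s t <-> right_cong_gen op X s t.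

Record Monoid := {
  Mcar :> Type;
  Mop : Mcar -> Mcar -> Mcar;
  Mone : Mcar;
  Massoc : forall x y z, Mop x (Mop y z) = Mop (Mop x y) z;
  Mone_l : forall x, Mop Mone x = x;
  Mone_r : forall x, Mop x Mone = x
}.

Section FreeProduct.
Variable I : Type.
Variable M : I -> Monoid.

Definition letter := { i : I & Mcar (M i) }.

Definition tag (x : letter) : I := projT1 x.

Fixpoint alt (l : list letter) : Prop :=
  match l with
  | x :: ((y :: _) as t) => tag x <> tag y /\ alt t
  | _ => True
  end.

Definition join (x y : letter) (v : list letter) : list letter :=
  match excluded_middle_informative (projT1 x = projT1 y) with
  | left e =>
      existT _ (projT1 x)
        (Mop (M (projT1 x)) (projT2 x)
           (eq_rect_r (fun k => Mcar (M k)) (projT2 y) e)) :: v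
  | right _ => x :: y :: v
  end.

Fixpoint mulw (u v : list letter) : list letter :=
  match u with
  | nil => v
  | x :: u' =>
      match u' with
      | nil => match v with nil => [x] | y :: v' => join x y v' end
      | _ :: _ => x :: mulw u' v
      end
  end.

Lemma mulw_head (x : letter) (u v : list letter) :
  exists w, mulw (x :: u) v = existT _ (projT1 x) (projT2 x) :: w \/
            (exists m, mulw (x :: u) v = existT _ (projT1 x) m :: w).
Proof.
  destruct u as [|z u].
  - destruct v as [|y v].
    + exists nil. left. destruct x; reflexivity.
    + unfold mulw, join. destruct (excluded_middle_informative (projT1 x = projT1 y)).
      * exists v. right. eexists. reflexivity.
      * exists (y :: v). left. destruct x; reflexivity.
  - exists (mulw (z :: u) v). left. destruct x; reflexivity.
Qed.

Lemma mulw_tag (x : letter) (u v : list letter) :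
  exists x' w, mulw (x :: u) v = x' :: w /\ tag x' = tag x.
Proof.
  destruct (mulw_head x u v) as [w [H | [m H]]]; rewrite H; eauto.
Qed.

Lemma alt_cons (x : letter) l : alt (x :: l) -> alt l.
Proof. destruct l; simpl; tauto. Qed.

Lemma mulw_alt (u v : list letter) : alt u -> alt v -> alt (mulw u v).
Proof.
  induction u as [|x u IH]; intros Hu Hv; [exact Hv|].
  destruct u as [|z u].
  - destruct v as [|y v]; [exact Logic.I|].
    unfold mulw, join. destruct (excluded_middle_informative (projT1 x = projT1 y)) as [e|n].
    + destruct v as [|y' v]; [exact Logic.I|].
      destruct Hv as [Hyy Hv]. split; [|exact Hv].
      unfold tag in *. cbn. rewrite e. exact Hyy.
    + split; [exact n| exact Hv].
  - change (alt (x :: mulw (z :: u) v)).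
    destruct Hu as [Hxz Hu].
    specialize (IH Hu Hv).
    destruct (mulw_tag z u v) as [x' [w [Hw Ht]]].
    rewrite Hw in IH |- *. split; [congruence|exact IH].
Qed.

Lemma mulw_nonnil (u v : list letter) : u <> nil -> mulw u v <> nil.
Proof.
  destruct u as [|x u]; [congruence|]. intros _.
  destruct (mulw_tag x u v) as [x' [w [H _]]]. rewrite H. discriminate.
Qed.

Definition SFP := { w : list letter | w <> nil /\ alt w }.

Definition sfp_mul (a b : SFP) : SFP :=
  exist _ (mulw (proj1_sig a) (proj1_sig b))
    (conj (mulw_nonnil _ (proj1 (proj2_sig a)))
          (@mulw_alt _ _ (proj2 (proj2_sig a)) (proj2 (proj2_sig b)))).

Lemma single_ok (x : letter) : [x] <> nil /\ alt [x].
Proof. split; [discriminate | exact Logic.I]. Qed.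

Definition unit_word (i : I) : SFP :=
  exist _ [existT _ i (Mone (M i))] (single_ok (existT _ i (Mone (M i)))).

Definition congruence (R : SFP -> SFP -> Prop) : Prop :=
  (forall s, R s s) /\ (forall s t, R s t -> R t s) /\
  (forall s t u, R s t -> R t u -> R s u) /\
  (forall s t u, R s t -> R (sfp_mul s u) (sfp_mul t u) /\ R (sfp_mul u s) (sfp_mul u t)).

Definition sigma (s t : SFP) : Prop :=
  forall R, congruence R -> (forall i j, R (unit_word i) (unit_word j)) -> R s t.

(** The monoid free product: the quotient SFP / sigma, as the type of sigma-classes. *)
Definition MFP := { P : SFP -> Prop | exists a, P = sigma a }.

Definition cls (a : SFP) : MFP := exist _ (sigma a) (ex_intro _ a eq_refl).

Definition rep (c : MFP) : SFP := proj1_sig (constructive_indefinite_description _ (proj2_sig c)).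

Definition mfp_mul (c d : MFP) : MFP := cls (sfp_mul (rep c) (rep d)).

End FreeProduct.

(* Main.v *)
Require Import Defs.
From Stdlib Require Import List Classical ClassicalEpsilon FunctionalExtensionality PropExtensionality ProofIrrelevance.
From Stdlib Require Import Eqdep.
Import ListNotations.


Section RW.
Variable I : Type.
Variable M : I -> Monoid.

Notation L := (letter M).
Notation mk i a := (existT (fun k => Mcar (M k)) i a).
Definition is1 (x : L) : Prop := projT2 x = Mone (M (projT1 x)).

Definition lm (x z : L) (e : projT1 x = projT1 z) : L :=
  existT _ (projT1 x) (Mop (M (projT1 x)) (projT2 x) (eq_rect_r (fun k => Mcar (M k)) (projT2 z) e)).

Definition cons_red (x : L) (w : list L) : list L :=
  if excluded_middle_informative (is1 x) then w else
  match w with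
  | nil => [x]
  | z :: w' =>
    match excluded_middle_informative (projT1 x = projT1 z) with
    | left e => if excluded_middle_informative (is1 (lm x z e)) then w' else lm x z e :: w'
    | right _ => x :: w
    end
  end.

Ltac dem := match goal with |- context [excluded_middle_informative ?P] =>
  destruct (excluded_middle_informative P) end.

Lemma lm_same i a d (e : i = i) :
  lm (mk i a) (mk i d) e = mk i (Mop (M i) a d).
Proof. unfold lm; simpl. rewrite (UIP_refl _ _ e). reflexivity. Qed.

Lemma cr_id x w : is1 x -> cons_red x w = w.
Proof. intros h; unfold cons_red; dem; [reflexivity|contradiction]. Qed.

Lemma cr_nil x : ~ is1 x -> cons_red x [] = [x].
Proof. intros h; unfold cons_red; dem; [contradiction|reflexivity]. Qed.

Lemma cr_s1 i a d w : a <> Mone (M i) -> Mop (M i) a d = Mone (M i) ->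
  cons_red (mk i a) (mk i d :: w) = w.
Proof.
  intros h1 h2; unfold cons_red; dem; [contradiction|].
  dem; [|exfalso; auto]. rewrite lm_same. dem; [reflexivity|]. exfalso; apply n0; exact h2.
Qed.

Lemma cr_s2 i a d w : a <> Mone (M i) -> Mop (M i) a d <> Mone (M i) ->
  cons_red (mk i a) (mk i d :: w) = mk i (Mop (M i) a d) :: w.
Proof.
  intros h1 h2; unfold cons_red; dem; [contradiction|].
  dem; [|exfalso; auto]. rewrite lm_same. dem; [contradiction|reflexivity].
Qed.

Lemma cr_d x z w : ~ is1 x -> projT1 x <> projT1 z -> cons_red x (z :: w) = x :: z :: w.
Proof. intros h1 h2; unfold cons_red; dem; [contradiction|]. dem; [contradiction|reflexivity]. Qed.

Definition hdne (i : I) (w : list L) : Prop :=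
  match w with nil => True | z :: _ => i <> projT1 z end.

Lemma cr_hd x w : ~ is1 x -> hdne (projT1 x) w -> cons_red x w = x :: w.
Proof. intros h1 h2; destruct w as [|z w]; [apply cr_nil; auto| apply cr_d; auto]. Qed.

Definition reduced (w : list L) := alt w /\ Forall (fun x => ~ is1 x) w.

Lemma reduced_cons x w : reduced (x :: w) <-> ~ is1 x /\ reduced w /\ hdne (projT1 x) w.
Proof.
  unfold reduced; split.
  - intros [ha hf]. inversion hf; subst. destruct w as [|z w]; simpl in *.
    + repeat split; auto.
    + destruct ha as [h1 h2]; repeat split; auto.
  - intros [h1 [[h2 h3] h4]]. split; [|constructor; auto].
    destruct w as [|z w]; simpl in *; auto.
Qed.

Lemma reduced_nil : reduced [].
Proof. split; simpl; auto. Qed.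

Lemma K i a b w : reduced w ->
  cons_red (mk i a) (cons_red (mk i b) w) = cons_red (mk i (Mop (M i) a b)) w.
Proof.
  intros hw.
  destruct (classic (b = Mone (M i))) as [hb|hb].
  { subst b. rewrite (cr_id (mk i (Mone (M i)))) by reflexivity. rewrite Mone_r. reflexivity. }
  destruct w as [|z w'].
  { rewrite (cr_nil (mk i b)) by exact hb.
    destruct (classic (a = Mone (M i))) as [ha|ha].
    { subst a. rewrite (cr_id (mk i (Mone (M i)))) by reflexivity. rewrite Mone_l.
      rewrite cr_nil by exact hb. reflexivity. }
    destruct (classic (Mop (M i) a b = Mone (M i))) as [hab|hab].
    { rewrite cr_s1 by auto. rewrite cr_id by exact hab. reflexivity. }
    rewrite cr_s2 by auto. rewrite cr_nil by exact hab. reflexivity. }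
  apply reduced_cons in hw. destruct hw as [hz [hw' hd]].
  destruct (classic (projT1 z = i)) as [hzi|hzi].
  2:{ rewrite (cr_d (mk i b)) by (simpl; auto).
      destruct (classic (a = Mone (M i))) as [ha|ha].
      { subst a. rewrite (cr_id (mk i (Mone (M i)))) by reflexivity. rewrite Mone_l.
        rewrite cr_d by (simpl; auto). reflexivity. }
      destruct (classic (Mop (M i) a b = Mone (M i))) as [hab|hab].
      { rewrite cr_s1 by auto. rewrite cr_id by exact hab. reflexivity. }
      rewrite cr_s2 by auto. rewrite cr_d by (simpl; auto). reflexivity. }
  destruct z as [j d]; simpl in hzi, hz, hd; subst j.
  destruct (classic (Mop (M i) b d = Mone (M i))) as [hbd|hbd].
  - rewrite (cr_s1 i b d) by auto.
    destruct (classic (a = Mone (M i))) as [ha|ha].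
    { subst a. rewrite (cr_id (mk i (Mone (M i)))) by reflexivity. rewrite Mone_l.
      rewrite cr_s1 by auto. reflexivity. }
    assert (hx : cons_red (mk i a) w' = mk i a :: w') by (apply cr_hd; auto).
    rewrite hx.
    assert (had : Mop (M i) (Mop (M i) a b) d = a).
    { rewrite <- Massoc, hbd, Mone_r. reflexivity. }
    destruct (classic (Mop (M i) a b = Mone (M i))) as [hab|hab].
    + rewrite cr_id by exact hab. rewrite hab, Mone_l in had. subst d. reflexivity.
    + rewrite cr_s2 by (auto; rewrite had; auto). rewrite had. reflexivity.
  - rewrite (cr_s2 i b d) by auto.
    destruct (classic (a = Mone (M i))) as [ha|ha].
    { subst a. rewrite (cr_id (mk i (Mone (M i)))) by reflexivity. rewrite Mone_l.
      rewrite cr_s2 by auto. reflexivity. }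
    destruct (classic (Mop (M i) a (Mop (M i) b d) = Mone (M i))) as [habd|habd].
    + rewrite cr_s1 by auto.
      destruct (classic (Mop (M i) a b = Mone (M i))) as [hab|hab].
      * exfalso. rewrite Massoc, hab, Mone_l in habd. auto.
      * rewrite cr_s1 by (auto; rewrite <- Massoc; auto). reflexivity.
    + rewrite cr_s2 by auto.
      destruct (classic (Mop (M i) a b = Mone (M i))) as [hab|hab].
      * rewrite cr_id by exact hab. rewrite Massoc, hab, Mone_l. reflexivity.
      * rewrite cr_s2 by (auto; rewrite <- Massoc; auto). rewrite Massoc. reflexivity.
Qed.


Lemma cr_reduced x w : reduced w -> reduced (cons_red x w).
Proof.
  intros hw. destruct (classic (is1 x)) as [h|h]; [rewrite cr_id; auto|].
  destruct w as [|z w']; [rewrite cr_nil by auto; apply reduced_cons; repeat split; auto; apply reduced_nil|].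
  pose proof hw as hw0. apply reduced_cons in hw. destruct hw as [hz [hw' hd]].
  destruct (classic (projT1 x = projT1 z)) as [e|e].
  - destruct x as [i a], z as [j d]; simpl in e, hd; subst j.
    destruct (classic (Mop (M i) a d = Mone (M i))) as [h2|h2].
    + rewrite cr_s1; [exact hw'|exact h|exact h2].
    + rewrite cr_s2; [|exact h|exact h2]. apply reduced_cons; split; [exact h2|split; [exact hw'|exact hd]].
  - rewrite cr_d by auto. apply reduced_cons; split; [exact h|split; [exact hw0|exact e]].
Qed.

Definition rmul (u v : list L) : list L := fold_right cons_red v u.

Lemma rmul_reduced u v : reduced v -> reduced (rmul u v).
Proof. induction u; simpl; auto using cr_reduced. Qed.

Lemma Lm x w1 w2 : reduced w1 -> reduced w2 -> rmul (cons_red x w1) w2 = cons_red x (rmul w1 w2).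
Proof.
  intros h1 h2. destruct x as [i a].
  destruct (classic (a = Mone (M i))) as [ha|ha].
  { subst a. rewrite !(cr_id (mk i (Mone (M i)))) by reflexivity. reflexivity. }
  destruct w1 as [|z w1']; [rewrite cr_nil by auto; reflexivity|].
  apply reduced_cons in h1. destruct h1 as [hz [hw' hd]].
  destruct (classic (projT1 z = i)) as [e|e].
  - destruct z as [j d]; simpl in e, hd, hz; subst j.
    change (rmul (mk i d :: w1') w2) with (cons_red (mk i d) (rmul w1' w2)).
    rewrite K by (apply rmul_reduced; auto).
    destruct (classic (Mop (M i) a d = Mone (M i))) as [h3|h3].
    + rewrite cr_s1 by auto. rewrite cr_id by exact h3. reflexivity.
    + rewrite cr_s2 by auto. reflexivity.
  - rewrite cr_d by (simpl; auto). reflexivity.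
Qed.

Lemma rmul_assoc u v w : reduced v -> reduced w -> rmul (rmul u v) w = rmul u (rmul v w).
Proof.
  intros hv hw. induction u as [|x u IH]; simpl; [reflexivity|].
  rewrite Lm by (auto using rmul_reduced). rewrite IH. reflexivity.
Qed.

Lemma rmul_nil_r w : reduced w -> rmul w [] = w.
Proof.
  induction w as [|x w IH]; intros h; simpl; [reflexivity|].
  apply reduced_cons in h. destruct h as [h1 [h2 h3]]. rewrite IH by auto. apply cr_hd; auto.
Qed.

Lemma rmul_app w v : reduced (w ++ v) -> rmul w v = w ++ v.
Proof.
  induction w as [|x w IH]; intros h; simpl; [reflexivity|].
  simpl in h. apply reduced_cons in h. destruct h as [h1 [h2 h3]]. rewrite IH by auto. apply cr_hd; auto.
Qed.

Lemma join_same i a b v : join (mk i a) (mk i b) v = mk i (Mop (M i) a b) :: v.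
Proof. unfold join; dem; [simpl in *; rewrite (UIP_refl _ _ e); reflexivity | exfalso; apply n; reflexivity]. Qed.

Lemma join_diff (x y : L) (v : list L) : projT1 x <> projT1 y -> join x y v = x :: y :: v.
Proof. intros h; unfold join; dem; [contradiction|reflexivity]. Qed.

Lemma rmul_mulw u v w : reduced w -> rmul (mulw u v) w = rmul u (rmul v w).
Proof.
  intros hw. induction u as [|x u IH]; [reflexivity|]. destruct u as [|z u].
  - destruct v as [|y v]; [reflexivity|].
    change (mulw [x] (y :: v)) with (join x y v).
    destruct (classic (projT1 x = projT1 y)) as [e|e].
    + destruct x as [i a], y as [j b]; simpl in e; subst j. rewrite join_same.
      simpl. rewrite K by (apply rmul_reduced; auto). reflexivity.
    + rewrite join_diff by auto. reflexivity.
  - change (mulw (x :: z :: u) v) with (x :: mulw (z :: u) v). simpl. simpl in IH. rewrite IH. reflexivity.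
Qed.

Definition nf (u : list L) : list L := rmul u [].

Lemma nf_reduced u : reduced (nf u).
Proof. apply rmul_reduced, reduced_nil. Qed.

Lemma nf_mul u v : nf (mulw u v) = rmul (nf u) (nf v).
Proof.
  unfold nf at 1. rewrite rmul_mulw by apply reduced_nil.
  unfold nf. rewrite rmul_assoc by (auto using reduced_nil, rmul_reduced). reflexivity.
Qed.


Lemma sfp_eq (u v : SFP M) : proj1_sig u = proj1_sig v -> u = v.
Proof. destruct u as [u pu], v as [v pv]; simpl; intros h; subst; f_equal; apply proof_irrelevance. Qed.

Lemma sig_refl s : @sigma I M s s.
Proof. intros R [h _] _; apply h. Qed.
Lemma sig_sym s t : @sigma I M s t -> sigma t s.
Proof. intros H R HR Hu. pose proof HR as [h1 [h2 _]]. apply h2, H; auto. Qed.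
Lemma sig_trans s t u : @sigma I M s t -> sigma t u -> sigma s u.
Proof. intros H1 H2 R HR Hu. pose proof HR as [_ [_ [h3 _]]]. apply h3 with t; [apply H1|apply H2]; auto. Qed.
Lemma sig_mulr s t u : @sigma I M s t -> sigma (sfp_mul s u) (sfp_mul t u).
Proof. intros H R HR Hu. pose proof HR as [_ [_ [_ h4]]]. apply h4, H; auto. Qed.
Lemma sig_mull s t u : @sigma I M s t -> sigma (sfp_mul u s) (sfp_mul u t).
Proof. intros H R HR Hu. pose proof HR as [_ [_ [_ h4]]]. apply h4, H; auto. Qed.
Lemma sig_unit i j : sigma (unit_word M i) (unit_word M j).
Proof. intros R HR Hu; apply Hu. Qed.

Lemma sigma_nf s t : @sigma I M s t -> nf (proj1_sig s) = nf (proj1_sig t).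
Proof.
  intros H. apply (H (fun s t => nf (proj1_sig s) = nf (proj1_sig t))).
  - split; [reflexivity|split; [intros; symmetry; auto|split; [intros; etransitivity; eauto|]]].
    intros a b c h. simpl. rewrite !nf_mul, h. split; reflexivity.
  - intros i j. simpl. unfold nf; simpl. rewrite !(cr_id (mk _ (Mone (M _)))) by reflexivity. reflexivity.
Qed.

Lemma sig_unit_l i (u : SFP M) : sigma (sfp_mul (unit_word M i) u) u.
Proof.
  destruct u as [l p]. destruct l as [|z rest]; [exfalso; apply (proj1 p); reflexivity|].
  eapply sig_trans; [apply sig_mulr, (sig_unit i (projT1 z))|].
  replace (sfp_mul (unit_word M (projT1 z)) (exist _ (z :: rest) p)) with (exist (fun w => w <> nil /\ alt w) (z :: rest) p);
    [apply sig_refl|].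
  apply sfp_eq. simpl. change (mulw [mk (projT1 z) (Mone (M (projT1 z)))] (z :: rest))
    with (join (mk (projT1 z) (Mone (M (projT1 z)))) z rest).
  destruct z as [j d]. simpl. rewrite join_same, Mone_l. reflexivity.
Qed.

Definition canL (i0 : I) (w : list L) : list L :=
  match w with nil => [mk i0 (Mone (M i0))] | _ => w end.

Lemma canL_ok i0 w : reduced w -> canL i0 w <> nil /\ alt (canL i0 w).
Proof. intros h; destruct w; simpl; [split; [discriminate|exact Logic.I]|split; [discriminate|exact (proj1 h)]]. Qed.

Lemma nf_canL i0 w : reduced w -> nf (canL i0 w) = w.
Proof.
  intros h; destruct w as [|z w]; cbn [canL].
  - unfold nf; simpl; apply cr_id; reflexivity.
  - apply rmul_nil_r; auto.
Qed.

Lemma E2 i0 x w (hw : reduced w) (s t : SFP M) :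
  proj1_sig s = mulw [x] (canL i0 w) -> proj1_sig t = canL i0 (cons_red x w) -> sigma s t.
Proof.
  intros hs ht. destruct x as [i a].
  destruct (classic (a = Mone (M i))) as [ha|ha].
  { subst a. rewrite cr_id in ht by reflexivity.
    replace s with (sfp_mul (unit_word M i) t); [apply sig_unit_l|].
    apply sfp_eq; simpl; rewrite hs, ht; reflexivity. }
  destruct w as [|z w'].
  { rewrite cr_nil in ht by exact ha. simpl in ht.
    replace s with (sfp_mul t (unit_word M i0)) by (apply sfp_eq; simpl; rewrite hs, ht; reflexivity).
    eapply sig_trans; [apply sig_mull, (sig_unit i0 i)|].
    replace (sfp_mul t (unit_word M i)) with t; [apply sig_refl|].
    apply sfp_eq; simpl; rewrite ht. change (mulw [mk i a] [mk i (Mone (M i))]) with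
      (join (mk i a) (mk i (Mone (M i))) []). rewrite join_same, Mone_r. reflexivity. }
  pose proof hw as hw0. apply reduced_cons in hw. destruct hw as [hz [hw' hd]].
  simpl in hs. change (mulw [mk i a] (z :: w')) with (join (mk i a) z w') in hs.
  destruct (classic (projT1 z = i)) as [e|e].
  - destruct z as [j d]; simpl in e, hd, hz; subst j. rewrite join_same in hs.
    destruct (classic (Mop (M i) a d = Mone (M i))) as [h3|h3].
    + rewrite cr_s1 in ht by auto.
      destruct w' as [|z' w''].
      * simpl in ht. replace s with (unit_word M i) by (apply sfp_eq; simpl; rewrite hs, h3; reflexivity).
        replace t with (unit_word M i0) by (apply sfp_eq; simpl; rewrite ht; reflexivity).
        apply sig_unit.
      * simpl in ht. replace s with (sfp_mul (unit_word M i) t); [apply sig_unit_l|].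
        apply sfp_eq; simpl; rewrite hs, ht, h3.
        change (mulw [mk i (Mone (M i))] (z' :: w'')) with (join (mk i (Mone (M i))) z' w'').
        rewrite join_diff by (simpl; auto). reflexivity.
    + rewrite cr_s2 in ht by auto. simpl in ht.
      replace s with t; [apply sig_refl|]. apply sfp_eq; rewrite hs, ht; reflexivity.
  - rewrite join_diff in hs by (simpl; auto). rewrite cr_d in ht by (simpl; auto). simpl in ht.
    replace s with t; [apply sig_refl|]. apply sfp_eq; rewrite hs, ht; reflexivity.
Qed.

Lemma E1 i0 l (p : l <> nil /\ alt l) (t : SFP M) :
  proj1_sig t = canL i0 (nf l) -> sigma (exist _ l p) t.
Proof.
  revert p t. induction l as [|x l IH]; intros p t ht; [exfalso; apply (proj1 p); reflexivity|].
  destruct l as [|y l''].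
  - set (s0 := sfp_mul (exist (fun w => w <> nil /\ alt w) [x] p) (unit_word M i0)).
    apply sig_trans with s0.
    + replace (exist (fun w => w <> nil /\ alt w) [x] p) with
        (sfp_mul (exist (fun w => w <> nil /\ alt w) [x] p) (unit_word M (projT1 x))) at 1.
      * apply sig_mull, sig_unit.
      * apply sfp_eq; simpl. change (mulw [x] [mk (projT1 x) (Mone (M (projT1 x)))]) with
          (join x (mk (projT1 x) (Mone (M (projT1 x)))) []).
        destruct x as [i a]; simpl. rewrite join_same, Mone_r. reflexivity.
    + apply (E2 i0 x _ reduced_nil); [reflexivity|exact ht].
  - destruct p as [pn pa]. pose proof pa as [hxy pa'].
    assert (p' : y :: l'' <> nil /\ alt (y :: l'')) by (split; [discriminate|exact pa']).
    set (t' := exist (fun w => w <> nil /\ alt w) (canL i0 (nf (y :: l''))) (canL_ok i0 _ (nf_reduced (y :: l'')))).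
    specialize (IH p' t' eq_refl).
    replace (exist (fun w => w <> nil /\ alt w) (x :: y :: l'') (conj pn pa)) with
      (sfp_mul (exist _ [x] (single_ok x)) (exist _ (y :: l'') p')).
    + eapply sig_trans; [apply sig_mull, IH|].
      apply (E2 i0 x _ (nf_reduced (y :: l''))); [reflexivity|exact ht].
    + apply sfp_eq; simpl. change (mulw [x] (y :: l'')) with (join x y l'').
      apply join_diff; exact hxy.
Qed.

Definition RWT := { w : list L | reduced w }.
Definition rwmul (u v : RWT) : RWT :=
  exist _ (rmul (proj1_sig u) (proj1_sig v)) (rmul_reduced (proj1_sig u) _ (proj2_sig v)).

Lemma rw_eq (u v : RWT) : proj1_sig u = proj1_sig v -> u = v.
Proof. destruct u as [u pu], v as [v pv]; simpl; intros h; subst; f_equal; apply proof_irrelevance. Qed.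

Lemma rep_spec (c : MFP M) : proj1_sig c = sigma (rep c).
Proof. unfold rep. destruct (constructive_indefinite_description _ (proj2_sig c)) as [a h]. simpl. exact h. Qed.

Lemma rep_cls (b : SFP M) : sigma b (rep (cls b)).
Proof. pose proof (rep_spec (cls b)) as h. simpl in h. rewrite h. apply sig_refl. Qed.

Definition Phi (c : MFP M) : RWT := exist _ (nf (proj1_sig (rep c))) (nf_reduced _).
Definition Psi (i0 : I) (w : RWT) : MFP M :=
  cls (exist _ (canL i0 (proj1_sig w)) (canL_ok i0 _ (proj2_sig w))).

Lemma Phi_Psi i0 w : Phi (Psi i0 w) = w.
Proof.
  apply rw_eq. simpl. unfold Psi. rewrite <- (sigma_nf _ _ (rep_cls _)). simpl.
  apply nf_canL, proj2_sig.
Qed.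

Lemma mfp_eq (c d : MFP M) : proj1_sig c = proj1_sig d -> c = d.
Proof. destruct c as [c pc], d as [d pd]; simpl; intros h; subst; f_equal; apply proof_irrelevance. Qed.

Lemma Psi_Phi i0 c : Psi i0 (Phi c) = c.
Proof.
  assert (hs : sigma (rep c) (exist _ (canL i0 (nf (proj1_sig (rep c)))) (canL_ok i0 _ (nf_reduced _)))).
  { destruct (rep c) as [l p]. apply (E1 i0). reflexivity. }
  apply mfp_eq. rewrite (rep_spec c). unfold Psi, Phi, cls. simpl.
  apply functional_extensionality; intros s. apply propositional_extensionality.
  split; intros h.
  - eapply sig_trans; [exact hs|exact h].
  - eapply sig_trans; [apply sig_sym; exact hs|exact h].
Qed.

Lemma Phi_hom c d : Phi (mfp_mul c d) = rwmul (Phi c) (Phi d).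
Proof.
  apply rw_eq. simpl. unfold mfp_mul. rewrite <- (sigma_nf _ _ (rep_cls _)). simpl. apply nf_mul.
Qed.


Definition iota (i : I) (x : Mcar (M i)) : RWT :=
  exist _ (cons_red (mk i x) []) (cr_reduced (mk i x) [] reduced_nil).

Definition proj (i : I) (x : L) : Mcar (M i) :=
  match excluded_middle_informative (projT1 x = i) with
  | left e => eq_rect _ (fun k => Mcar (M k)) (projT2 x) _ e
  | right _ => Mone (M i)
  end.

Lemma proj_same i a : proj i (mk i a) = a.
Proof. unfold proj; dem; [simpl in *; rewrite (UIP_refl _ _ e); reflexivity|exfalso; apply n; reflexivity]. Qed.

Lemma proj_diff i j a : j <> i -> proj i (mk j a) = Mone (M i).
Proof. intros h; unfold proj; dem; [contradiction|reflexivity]. Qed.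

Definition pil (i : I) (w : list L) : Mcar (M i) :=
  fold_right (fun x acc => Mop (M i) (proj i x) acc) (Mone (M i)) w.

Lemma pi_cr i x w : reduced w -> pil i (cons_red x w) = Mop (M i) (proj i x) (pil i w).
Proof.
  intros hw. destruct x as [j a].
  destruct (classic (a = Mone (M j))) as [ha|ha].
  { subst a. rewrite cr_id by reflexivity.
    destruct (classic (j = i)) as [e|e]; [subst j; rewrite proj_same|rewrite proj_diff by auto];
    rewrite Mone_l; reflexivity. }
  destruct w as [|z w']; [rewrite cr_nil by auto; reflexivity|].
  apply reduced_cons in hw. destruct hw as [hz [hw' hd]].
  destruct (classic (projT1 z = j)) as [e|e].
  - destruct z as [k d]; simpl in e, hd, hz; subst k.
    destruct (classic (Mop (M j) a d = Mone (M j))) as [h3|h3].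
    + rewrite cr_s1 by auto. simpl.
      destruct (classic (j = i)) as [e|e].
      * subst j. rewrite !proj_same, Massoc, h3, Mone_l. reflexivity.
      * rewrite !proj_diff by auto. rewrite !Mone_l. reflexivity.
    + rewrite cr_s2 by auto. simpl.
      destruct (classic (j = i)) as [e|e].
      * subst j. rewrite !proj_same, Massoc. reflexivity.
      * rewrite !proj_diff by auto. rewrite !Mone_l. reflexivity.
  - rewrite cr_d by (simpl; auto). reflexivity.
Qed.

Lemma pil_hom i u v : reduced v -> pil i (rmul u v) = Mop (M i) (pil i u) (pil i v).
Proof.
  intros hv. induction u as [|x u IH]; simpl; [rewrite Mone_l; reflexivity|].
  rewrite pi_cr by (apply rmul_reduced; auto). rewrite IH, Massoc. reflexivity.
Qed.

Definition piw (i : I) (w : RWT) : Mcar (M i) := pil i (proj1_sig w).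

Lemma pi_iota i x : piw i (iota i x) = x.
Proof. unfold piw, iota; simpl. rewrite pi_cr by apply reduced_nil. rewrite proj_same. apply Mone_r. Qed.

Lemma iota_val i x w : reduced w -> rmul (proj1_sig (iota i x)) w = cons_red (mk i x) w.
Proof. intros h. simpl. rewrite Lm by (auto using reduced_nil). reflexivity. Qed.

Lemma iota_hom i x y : iota i (Mop (M i) x y) = rwmul (iota i x) (iota i y).
Proof.
  apply rw_eq. cbn [proj1_sig rwmul]. rewrite iota_val by (apply cr_reduced, reduced_nil).
  simpl. rewrite K by apply reduced_nil. reflexivity.
Qed.

Lemma piw_hom i u v : piw i (rwmul u v) = Mop (M i) (piw i u) (piw i v).
Proof. unfold piw; simpl. apply pil_hom, proj2_sig. Qed.

End RW.

Arguments is1 {I M} x.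
Arguments cons_red {I M} x w.
Arguments hdne {I M} i w.
Arguments reduced {I M} w.
Arguments rmul {I M} u v.
Arguments nf {I M} u.
Arguments canL {I M} i0 w.
Arguments RWT {I} M.
Arguments rwmul {I M} u v.
Arguments iota {I M} i x.
Arguments piw {I M} i w.
Arguments Phi {I M} c.
Arguments Psi {I M} i0 w.

Definition hom {T T' : Type} (op : T -> T -> T) (op' : T' -> T' -> T') (h : T -> T') :=
  forall x y, h (op x y) = op' (h x) (h y).

Definition mapp {T T'} (h : T -> T') (X : list (T * T)) : list (T' * T') :=
  map (fun p => (h (fst p), h (snd p))) X.

Lemma gen_rc (T : Type) (op : T -> T -> T) X : right_congruence op (right_cong_gen op X).
Proof.
  split; [intros s R [r _] _; apply r|].
  split; [intros s t H R HR HX; pose proof HR as [_ [sy _]]; apply sy, H; auto|].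
  split; [intros s t u H1 H2 R HR HX; pose proof HR as [_ [_ [tr _]]]; apply tr with t; [apply H1|apply H2]; auto|].
  intros s t u H R HR HX; pose proof HR as [_ [_ [_ cm]]]; apply cm, H; auto.
Qed.

Lemma gen_in (T : Type) (op : T -> T -> T) X p : In p X -> right_cong_gen op X (fst p) (snd p).
Proof. intros h R HR HX; apply HX; auto. Qed.

Lemma gen_mono (T : Type) (op : T -> T -> T) X1 X2 s t :
  (forall p, In p X1 -> In p X2) -> right_cong_gen op X1 s t -> right_cong_gen op X2 s t.
Proof. intros hi H R HR HX; apply H; auto. Qed.

Lemma gen_pull (T T' : Type) (op : T -> T -> T) (op' : T' -> T' -> T') h X s t :
  hom op op' h -> right_cong_gen op X s t -> right_cong_gen op' (mapp h X) (h s) (h t).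
Proof.
  intros hh H R HR HX. apply (H (fun a b => R (h a) (h b))).
  - destruct HR as [r [sy [tr cm]]].
    split; [intros; apply r|split; [intros; apply sy; auto|split; [intros a b c h1 h2; eapply tr; eauto|]]].
    intros a b c hab. rewrite !hh. apply cm; auto.
  - intros p hp. apply (HX (h (fst p), h (snd p))). apply in_map_iff. exists p; auto.
Qed.

Lemma gen_left (T : Type) (op : T -> T -> T) c Y s t :
  (forall x y z, op x (op y z) = op (op x y) z) ->
  right_cong_gen op Y s t -> right_cong_gen op (mapp (op c) Y) (op c s) (op c t).
Proof.
  intros ha H. apply (H (fun a b => right_cong_gen op (mapp (op c) Y) (op c a) (op c b))).
  - pose proof (gen_rc T op (mapp (op c) Y)) as [r [sy [tr cm]]].
    split; [intros; apply r|split; [intros; apply sy; auto|split; [intros a b d h1 h2; eapply tr; eauto|]]].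
    intros a b d hab. rewrite !ha. apply cm; auto.
  - intros p hp. apply (gen_in T op (mapp (op c) Y) (op c (fst p), op c (snd p))). apply in_map_iff. exists p; auto.
Qed.

Lemma rann_rc (T : Type) (op : T -> T -> T) a :
  (forall x y z, op x (op y z) = op (op x y) z) -> right_congruence op (r_ann op a).
Proof.
  intros ha; unfold r_ann. split; [reflexivity|split; [intros; symmetry; auto|split; [intros; etransitivity; eauto|]]].
  intros s t u h. rewrite !ha, h. reflexivity.
Qed.

Lemma FRE_transfer (T T' : Type) (op : T -> T -> T) (op' : T' -> T' -> T') (f : T -> T') (g : T' -> T) :
  (forall x, g (f x) = x) -> (forall y, f (g y) = y) -> hom op op' f -> FRE op' -> FRE op.
Proof.
  intros gf fg hf F a.
  assert (hg : hom op' op g).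
  { intros x y. rewrite <- (fg x), <- (fg y), <- hf, !gf. reflexivity. }
  destruct (F (f a)) as [X HX]. exists (mapp g X). intros s t. split.
  - intros h. rewrite <- (gf s), <- (gf t). apply (gen_pull _ _ op' op g); auto. apply HX.
    unfold r_ann in *. rewrite <- !hf, h. reflexivity.
  - intros h. apply (gen_pull _ _ op op' f) in h; auto.
    assert (e : mapp f (mapp g X) = X).
    { unfold mapp. rewrite map_map. simpl. rewrite <- (map_id X) at 2. apply map_ext.
      intros [p q]; simpl; rewrite !fg; reflexivity. }
    rewrite e in h. apply HX in h. unfold r_ann in *. rewrite <- !hf in h.
    apply (f_equal g) in h. rewrite !gf in h. exact h.
Qed.

Lemma FRE_retract (T : Type) (op : T -> T -> T) (M0 : Monoid) (io : Mcar M0 -> T) (pr : T -> Mcar M0) :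
  hom (Mop M0) op io -> hom op (Mop M0) pr -> (forall x, pr (io x) = x) -> FRE op -> FRE (Mop M0).
Proof.
  intros hi hp hpi F a. destruct (F (io a)) as [X HX]. exists (mapp pr X). intros s t; split.
  - intros h. rewrite <- (hpi s), <- (hpi t). apply (gen_pull _ _ op (Mop M0) pr); auto. apply HX.
    unfold r_ann in *. rewrite <- !hi, h. reflexivity.
  - intros h.
    apply h; [apply rann_rc, Massoc|].
    intros p hin. apply in_map_iff in hin. destruct hin as [q [eq hq]]. subst p. simpl.
    pose proof (proj2 (HX _ _) (gen_in _ _ _ _ hq)) as e. unfold r_ann in *.
    rewrite <- (hpi a), <- !hp, e. reflexivity.
Qed.

Section Hard.
Variable I : Type.
Variable M : I -> Monoid.
Notation L := (letter M).
Notation mk i a := (existT (fun k => Mcar (M k)) i a).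
Notation RW := (RWT M).

Lemma reduced_app_l (l m : list L) : reduced (l ++ m) -> reduced l.
Proof.
  induction l as [|x l IH]; intros h; [apply reduced_nil|]. simpl in h.
  apply reduced_cons in h. destruct h as [h1 [h2 h3]]. apply reduced_cons.
  split; [exact h1|split; [apply IH; auto|]]. destruct l; simpl in *; auto.
Qed.

Lemma rmul_snoc (l : list L) y s : rmul (l ++ [y]) s = rmul l (cons_red y s).
Proof. unfold rmul. rewrite fold_right_app. reflexivity. Qed.

Lemma reduced_app_snoc (l : list L) y y' m :
  reduced (l ++ [y]) -> reduced (y' :: m) -> projT1 y' = projT1 y -> reduced (l ++ y' :: m).
Proof.
  induction l as [|x l IH]; intros h1 h2 e; [exact h2|].
  simpl in h1 |- *. apply reduced_cons in h1. destruct h1 as [a [b c]].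
  apply reduced_cons. split; [exact a|split; [apply IH; auto|]].
  destruct l as [|z l]; simpl in *; [rewrite e; exact c| exact c].
Qed.

Lemma decomp i (s : RW) : exists s1 (S : RW), hdne i (proj1_sig S) /\
  proj1_sig s = cons_red (mk i s1) (proj1_sig S).
Proof.
  destruct s as [w hw]. simpl. destruct w as [|z w'].
  - exists (Mone (M i)), (exist _ [] (reduced_nil I M)). simpl.
    split; [exact Logic.I| rewrite cr_id by reflexivity; reflexivity].
  - pose proof hw as hw0. apply reduced_cons in hw. destruct hw as [hz [hw' hd]].
    destruct (classic (projT1 z = i)) as [e|e].
    + destruct z as [j d]; simpl in e, hd, hz; subst j. exists d, (exist _ w' hw'). simpl.
      split; [exact hd|]. symmetry; apply cr_hd; auto.
    + exists (Mone (M i)), (exist _ (z :: w') hw0). simpl.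
      split; [intro h; apply e; symmetry; exact h| rewrite cr_id by reflexivity; reflexivity].
Qed.

Lemma decomp_eq i s1 (s S : RW) : proj1_sig s = cons_red (mk i s1) (proj1_sig S) -> s = rwmul (iota i s1) S.
Proof. intros h. apply rw_eq. cbn [rwmul proj1_sig]. rewrite iota_val by apply proj2_sig. exact h. Qed.

Lemma rw_assoc (x y z : RW) : rwmul x (rwmul y z) = rwmul (rwmul x y) z.
Proof. apply rw_eq; simpl. symmetry; apply rmul_assoc; apply proj2_sig. Qed.

Lemma hard (HF : forall i, FRE (Mop (M i))) : forall l (hl : reduced l), exists X : list (RW * RW),
  forall s t : RW, rmul l (proj1_sig s) = rmul l (proj1_sig t) <-> right_cong_gen rwmul X s t.
Proof.
  intros l. induction l as [|y l IH] using rev_ind; intros hl.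
  - exists []. intros s t. split.
    + intros h. simpl in h. replace t with s by (apply rw_eq; exact h). apply (proj1 (gen_rc _ _ _)).
    + intros h. apply (h (fun s t => proj1_sig s = proj1_sig t)).
      * split; [reflexivity|split; [intros; symmetry; auto|split; [intros; etransitivity; eauto|]]].
        intros a b c e. simpl. rewrite e. reflexivity.
      * intros p [].
  - assert (hl' : reduced l) by (eapply reduced_app_l; eauto).
    destruct (IH hl') as [Y HY].
    destruct y as [i yv].
    destruct (HF i yv) as [Xi HXi].
    set (Xi' := mapp (iota i) Xi).
    assert (Xi_ok : forall s1 t1, Mop (M i) yv s1 = Mop (M i) yv t1 -> forall X,
      (forall p, In p Xi' -> In p X) -> right_cong_gen rwmul X (iota i s1) (iota i t1)).
    { intros s1 t1 e X hX. apply gen_mono with Xi'; auto.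
      apply (gen_pull _ _ (Mop (M i)) rwmul (iota i)); [intros x y; apply iota_hom|]. apply HXi. exact e. }
    assert (Lrc : right_congruence rwmul (fun s t : RW =>
      rmul (l ++ [mk i yv]) (proj1_sig s) = rmul (l ++ [mk i yv]) (proj1_sig t))).
    { split; [reflexivity|split; [intros; symmetry; auto|split; [intros; etransitivity; eauto|]]].
      intros a b c e. simpl. rewrite <- !rmul_assoc by (apply proj2_sig). rewrite e. reflexivity. }
    assert (Xi_in : forall p, In p Xi' ->
      rmul (l ++ [mk i yv]) (proj1_sig (fst p)) = rmul (l ++ [mk i yv]) (proj1_sig (snd p))).
    { intros p hp. unfold Xi', mapp in hp. apply in_map_iff in hp. destruct hp as [q [eq hq]]. subst p.
      cbn [fst snd iota proj1_sig].
      rewrite !rmul_snoc. rewrite !K by apply reduced_nil.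
      pose proof (proj2 (HXi _ _) (gen_in _ _ _ _ hq)) as e. unfold r_ann in e. rewrite e. reflexivity. }
    destruct (classic (exists e, Mop (M i) yv e = Mone (M i))) as [[e he]|hne].
    + set (Ye := mapp (rwmul (iota i e)) Y).
      exists (Xi' ++ Ye). intros s t. split.
      * intros h. rewrite !rmul_snoc in h.
        set (W := fun s : RW => exist reduced (cons_red (mk i yv) (proj1_sig s)) (cr_reduced _ _ _ _ (proj2_sig s)) : RW).
        assert (A : forall s, right_cong_gen rwmul (Xi' ++ Ye) s (rwmul (iota i e) (W s))).
        { intros s0. destruct (decomp i s0) as [s1 [S [hS es]]].
          assert (e1 : s0 = rwmul (iota i s1) S) by (apply decomp_eq; exact es).
          assert (e2 : rwmul (iota i e) (W s0) = rwmul (iota i (Mop (M i) e (Mop (M i) yv s1))) S).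
          { apply rw_eq. cbn [rwmul proj1_sig]. unfold W. cbn [proj1_sig].
            rewrite !iota_val by (try apply cr_reduced; apply proj2_sig).
            rewrite es. rewrite (K _ _ i yv s1 (proj1_sig S)) by apply proj2_sig. rewrite K by apply proj2_sig. reflexivity. }
          rewrite e2. rewrite e1. pose proof (gen_rc _ rwmul (Xi' ++ Ye)) as [_ [_ [_ cm]]]. apply cm.
          apply Xi_ok; [|intros p hp; apply in_or_app; left; auto].
          rewrite Massoc, he, Mone_l. reflexivity. }
        assert (B : right_cong_gen rwmul Y (W s) (W t)) by (apply HY; exact h).
        apply (gen_left _ rwmul (iota i e)) in B; [|apply rw_assoc].
        apply (gen_mono _ _ _ (Xi' ++ Ye)) in B; [|intros p hp; apply in_or_app; right; exact hp].
        pose proof (gen_rc _ rwmul (Xi' ++ Ye)) as [_ [sy [tr _]]].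
        apply tr with (rwmul (iota i e) (W s)); [apply A|].
        apply tr with (rwmul (iota i e) (W t)); [exact B|]. apply sy, A.
      * intros h. apply h; [exact Lrc|]. intros p hp. apply in_app_or in hp.
        destruct hp as [hp|hp]; [apply Xi_in; auto|].
        unfold Ye, mapp in hp. apply in_map_iff in hp. destruct hp as [q [eq hq]]. subst p.
        cbn [fst snd rwmul proj1_sig]. rewrite !iota_val by apply proj2_sig.
        rewrite !rmul_snoc. rewrite !K by apply proj2_sig. rewrite he. rewrite !cr_id by reflexivity.
        apply HY. apply (gen_in _ _ _ _ hq).
    + exists Xi'. intros s t. split.
      * intros h. rewrite !rmul_snoc in h.
        destruct (decomp i s) as [s1 [S [hS es]]]. destruct (decomp i t) as [t1 [T [hT et]]].
        rewrite es, et in h. rewrite !K in h by apply proj2_sig.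
        assert (c1 : Mop (M i) yv s1 <> Mone (M i)) by (intro; apply hne; eauto).
        assert (c2 : Mop (M i) yv t1 <> Mone (M i)) by (intro; apply hne; eauto).
        rewrite (cr_hd _ _ (mk i (Mop (M i) yv s1))) in h by (auto; exact c1).
        rewrite (cr_hd _ _ (mk i (Mop (M i) yv t1))) in h by (auto; exact c2).
        rewrite !rmul_app in h.
        2:{ apply reduced_app_snoc with (y := mk i yv); auto. apply reduced_cons.
            split; [exact c2|split; [apply proj2_sig|exact hT]]. }
        2:{ apply reduced_app_snoc with (y := mk i yv); auto. apply reduced_cons.
            split; [exact c1|split; [apply proj2_sig|exact hS]]. }
        apply app_inv_head in h. injection h as h1 h2.
        rewrite (decomp_eq _ _ _ _ es), (decomp_eq _ _ _ _ et).
        assert (S = T) by (apply rw_eq; exact h2). subst T.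
        pose proof (gen_rc _ rwmul Xi') as [_ [_ [_ cm]]]. apply cm.
        apply Xi_ok; [|auto]. apply inj_pair2 in h1. exact h1.
      * intros h. apply h; [exact Lrc| exact Xi_in].
Qed.

End Hard.

Lemma FRE_rw_of (I : Type) (M : I -> Monoid) : (forall i, FRE (Mop (M i))) -> FRE (@rwmul I M).
Proof.
  intros HF [l hl]. destruct (hard I M HF l hl) as [X HX]. exists X. intros s t.
  unfold r_ann. rewrite <- HX. split.
  - intros h. apply (f_equal (@proj1_sig _ _)) in h. exact h.
  - intros h. apply rw_eq. exact h.
Qed.

Lemma rw_to (I : Type) (M : I -> Monoid) i : FRE (@rwmul I M) -> FRE (Mop (M i)).
Proof.
  apply (FRE_retract _ _ (M i) (iota i) (piw i)).
  - intros x y; apply iota_hom.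
  - intros x y; apply piw_hom.
  - apply pi_iota.
Qed.

Theorem mainTheorem6 (I : Type) (M : I -> Monoid) :
  FRE (@mfp_mul I M) <-> (forall i : I, FRE (Mop (M i))).
Proof.
  destruct (classic (inhabited I)) as [[i0]|hI].
  - split.
    + intros F i. apply rw_to.
      apply (FRE_transfer _ _ rwmul (@mfp_mul I M) (Psi i0) Phi).
      * apply Phi_Psi.
      * apply Psi_Phi.
      * intros u v. rewrite <- (Phi_Psi _ _ i0 u), <- (Phi_Psi _ _ i0 v) at 1.
        rewrite <- Phi_hom. apply Psi_Phi.
      * exact F.
    + intros HF. apply (FRE_transfer _ _ (@mfp_mul I M) rwmul Phi (Psi i0)).
      * apply Psi_Phi.
      * apply Phi_Psi.
      * intros u v. apply Phi_hom.
      * apply FRE_rw_of; exact HF.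
  - split.
    + intros _ i. exfalso. apply hI. constructor. exact i.
    + intros _ a. exfalso. destruct (rep a) as [[|x l] [p _]]; [apply p; reflexivity|].
      apply hI. constructor. exact (projT1 x).
Qed.
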